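(* For integers $N\ge 2$ and $n\ge 1$, $$B_{N,n}=\frac{N}{N+n}\left\{\sum_{m=0}^{n-1}\ \sum_{1\le i_m<\cdots<i_1<i_0=n}B_{N-1,i_m}\prod_{k=1}^{m}B_{N-1,\,i_{k-1}-i_k+1}\binom{i_{k-1}}{i_{k-1}-i_k+1}\frac{N}{N+i_k}\right\},$$ where for each $m$ the inner sum runs over all integers $i_1,\dots,i_m$ with $1\le i_m<\cdots<i_1<i_0=n$ (for $m=0$ the inner sum consists of the single term $B_{N-1,n}$, the empty product being $1$).
   Context: For a positive integer $N$, the hypergeometric Bernoulli numbers $B_{N,n}$ ($n\ge 0$) are defined by $$\frac{x^N/N!}{e^x-\sum_{n=0}^{N-1}x^n/n!}=\sum_{n=0}^\infty B_{N,n}\frac{x^n}{n!}.$$ *)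

(* Defs.v *)
From mathcomp Require Import all_boot all_order all_algebra.
Set Implicit Arguments. Unset Strict Implicit. Unset Printing Implicit Defensive.
Import Order.TTheory GRing.Theory Num.Theory.
Local Open Scope ring_scope.

(* [hypB_gf N b] says that  sum_n b n x^n/n!  is the formal power series
     (x^N/N!) / (e^x - sum_{j<N} x^j/j!).
   Since  e^x - sum_{j<N} x^j/j! = sum_{j>=N} x^j/j!  (a series of valuation N),
   this quotient is the unique series F with  F * (sum_{j>=N} x^j/j!) = x^N/N!;
   we state this identity coefficientwise: the coefficient of x^m in the
   product is  sum_{k+j=m, j>=N} (b k / k!) (1 / j!),  and it must equal
   [m = N] / N!. *)
Definition hypB_gf (N : nat) (b : nat -> rat) : Prop :=
  forall m : nat,
    \sum_(k < m.+1 | (N <= m - k)%N) (b k / (k`!)%:R) * ((m - k)`!)%:R^-1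
    = (m == N)%:R / (N`!)%:R.

(* Main.v *)
Require Import Defs.
From mathcomp Require Import all_boot all_order all_algebra.
From mathcomp Require Import ring zify.
Import Order.TTheory GRing.Theory Num.Theory.
Local Open Scope ring_scope.

Definition eqM (M : nat) (p q : {poly rat}) := forall i, (i < M)%N -> p`_i = q`_i.

Lemma eqM_mul0 M (r p : {poly rat}) : eqM M p 0 -> eqM M (r * p) 0.
Proof.
move=> h i iM; rewrite coefM coef0 big1 // => j _.
rewrite h ?coef0 ?mulr0 //; exact: (leq_ltn_trans (leq_subr _ _) iM).
Qed.

Lemma eqM_cancel (D E : {poly rat}) (M d : nat) :
  (forall j, (j < d)%N -> E`_j = 0) -> E`_d != 0 -> eqM M (D * E) 0 ->
  forall k, (k + d < M)%N -> D`_k = 0.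
Proof.
move=> Ed Ed0 h; elim/ltn_ind => k IH kM.
have := h _ kM; rewrite coefM coef0.
have kk : (k < (k + d).+1)%N by rewrite ltnS leq_addr.
rewrite (bigD1 (Ordinal kk)) //= big1 ?addr0.
  by rewrite addKn => /eqP; rewrite mulf_eq0 (negPf Ed0) orbF => /eqP.
move=> j /eqP jk.
have [jlt|jge] := ltnP j k.
  by rewrite IH ?mul0r //; lia.
rewrite Ed ?mulr0 //.
have jgt : (k < j)%N by rewrite ltn_neqAle jge andbT; apply/eqP => e; apply: jk; apply: val_inj.
have := ltn_ord j; rewrite ltnS => jle.
lia.
Qed.


Lemma fact_neq0 k : (k`!)%:R != 0 :> rat.
Proof. by rewrite pnatr_eq0 -lt0n fact_gt0. Qed.

Lemma gf_poly N0 (b0 : nat -> rat) M : hypB_gf N0 b0 ->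
  eqM M (\poly_(i < M) (b0 i / (i`!)%:R) * \poly_(i < M) ((N0 <= i)%:R / (i`!)%:R))
        (((N0`!)%:R)^-1 *: 'X^N0).
Proof.
move=> h m mM; rewrite coefM coefZ coefXn mulrC -h [RHS]big_mkcond /=.
apply: eq_bigr => j _; rewrite !coef_poly.
have jM : (j < M)%N by apply: leq_ltn_trans mM; rewrite -ltnS.
have jM' : (m - j < M)%N by apply: leq_ltn_trans mM; apply: leq_subr.
rewrite jM jM'; case: (N0 <= m - j)%N => /=.
  by rewrite mul1r.
by rewrite mul0r mulr0.
Qed.

Lemma b0_val (b : nat -> rat) N' : (0 < N')%N -> hypB_gf N' b -> b 0%N = 1.
Proof.
move=> N0 h; have := h N'; rewrite eqxx big_mkcond big_ord_recl /= subn0 leqnn.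
rewrite big1 ?addr0.
  rewrite fact0 divr1 => e.
  by have := congr1 (fun t => t * (N'`!)%:R) e; rewrite /= !divfK ?fact_neq0.
move=> k _; have : ~~ (N' <= N' - (lift ord0 k))%N by rewrite !lift0 -ltnNge; lia.
by move/negbTE ->.
Qed.

Lemma b1_val (b : nat -> rat) N' : (0 < N')%N -> hypB_gf N' b ->
  b 1%N = - (N'.+1%:R)^-1.
Proof.
move=> N0 h; have b0 := @b0_val b N' N0 h.
have := h N'.+1; rewrite (gtn_eqF (ltnSn N')) mul0r big_mkcond.
rewrite big_ord_recl big_ord_recl /= subn0 subSS subn0 leqnn leqnSn big1 ?addr0.
  rewrite /bump /= b0 !factS fact0 add1n muln1 !divr1 mul1r => /eqP.
  rewrite addr_eq0 => /eqP e. have f := fact_neq0 N'.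
  have e' : b 1%N = - (1 / (N'.+1 * N'`!)%:R) * (N'`!)%:R.
    by rewrite e mul1r opprK divfK.
  rewrite e' natrM; field; by rewrite f andbT nat1r pnatr_eq0.
move=> k _; have : ~~ (N' <= N'.+1 - (lift ord0 (lift ord0 k)))%N by rewrite !lift0 -ltnNge; lia.
by move/negbTE ->.
Qed.


Lemma recur (B : nat -> nat -> rat) N' (N0 : (0 < N')%N)
  (h1 : hypB_gf N' (B N')) (h2 : hypB_gf N'.+1 (B N'.+1)) n' :
  B N'.+1 n'.+1 * (N'.+1 + n'.+1)%:R / N'.+1%:R =
  B N' n'.+1 + \sum_(i < n'.+1 | (0 < i)%N)
     B N' (n'.+1 - i + 1)%N * 'C(n'.+1, n'.+1 - i + 1)%:R * B N'.+1 i.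
Proof.
pose M0 := (n'.+1 + N'.+2)%N. pose M := M0.+1.
pose A := \poly_(i < M) (B N'.+1 i / (i`!)%:R).
pose G := \poly_(i < M) (B N' i / (i`!)%:R).
pose E := \poly_(i < M) ((N'.+1 <= i)%:R / (i`!)%:R : rat).
pose E1 := \poly_(i < M) ((N' <= i)%:R / (i`!)%:R : rat).
pose X1 := ((N'`!)%:R^-1 : rat) *: 'X^N'.
have hA : eqM M (A * E) (((N'.+1`!)%:R)^-1 *: 'X^(N'.+1)) := @gf_poly _ _ M h2.
have hG : eqM M (G * E1) X1 := @gf_poly _ _ M h1.
have hE : eqM M (E1 - E - X1) 0.
  move=> i iM; rewrite !coefB !coef_poly iM coefZ coefXn coef0.
  by case: (ltngtP i N') => [_|_|->]; rewrite /= ?mul0r ?mulr0 ?mul1r ?mulr1 ?subr0 ?subrr.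
have hdE : eqM M0 (E1 - E^`()) 0.
  move=> i iM; rewrite coefB coef_deriv !coef_poly coef0.
  have iM1 : (i < M)%N by rewrite /M; lia.
  have iM2 : (i.+1 < M)%N by rewrite /M; lia.
  rewrite iM1 iM2 ltnS.
  rewrite factS natrM -mulr_natr; field.
  by rewrite fact_neq0 nat1r pnatr_eq0.
have hdA : eqM M0 ((A * E)^`() - X1) 0.
  move=> i iM; rewrite coefB coef_deriv (hA i.+1) ?ltnS // coefZ coefXn coefZ coefXn coef0 eqSS.
  case: (i =P N') => [->|ne]; last by rewrite /= !mulr0 mul0rn oppr0 addr0.
  rewrite /= !mulr1.
  rewrite factS natrM -mulr_natr; field.
  by rewrite fact_neq0 nat1r pnatr_eq0.
pose D := A + A^`() - A^`() * G - G.
have key : D * E1 = ((A * E)^`() - X1) + A * (E1 - E^`()) + A^`() * (E1 - E - X1)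
     - A^`() * (G * E1 - X1) - (G * E1 - X1).
  by rewrite /D derivM; ring.
have hGX : eqM M (G * E1 - X1) 0 by move=> k kM; rewrite coefB hG // coef0 subrr.
have hDE : eqM M0 (D * E1) 0.
  move=> k kM; rewrite key coefB coefB coefD coefD coef0 hdA // (@eqM_mul0 _ _ _ hdE) //.
  rewrite (@eqM_mul0 _ _ _ hE) ?(leqW kM) // (@eqM_mul0 _ _ _ hGX) ?(leqW kM) //.
  by rewrite hGX ?(leqW kM) // !coef0 !oppr0 !addr0.
have Dn : D`_n'.+1 = 0.
  apply: (@eqM_cancel D E1 M0 N') => //.
  - by move=> j jlt; rewrite coef_poly; case: ifP => // _; rewrite leqNgt jlt mul0r.
  - have NM : (N' < M)%N by rewrite /M /M0; lia.
    by rewrite coef_poly NM leqnn mul1r invr_eq0 fact_neq0.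
  - by rewrite /M0; lia.
have b0 := @b0_val (B N') N' N0 h1.
have b1 := @b1_val (B N') N' N0 h1.
have sumE : (A^`() * G)`_n'.+1 = (n'.+1`!)%:R^-1 *
    \sum_(j < n') (B N' (n'.+1 - j)%N * 'C(n'.+1, j)%:R * B N'.+1 j.+1)
    + B N'.+1 n'.+1 / (n'`!)%:R * B N' 1%N + B N'.+1 n'.+2 / (n'.+1`!)%:R * B N' 0%N.
  rewrite coefM big_ord_recr big_ord_recr /= mulr_sumr.
  congr (_ + _ + _).
  - apply: eq_bigr => j _; rewrite coef_deriv !coef_poly.
    have := ltn_ord j => jn.
    have j1 : (j.+1 < M)%N by rewrite /M /M0; lia.
    have j2 : (n'.+1 - j < M)%N by rewrite /M /M0; lia.
    rewrite j1 j2. have jle : (j <= n'.+1)%N by lia.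
    have bf : 'C(n'.+1, j)%:R * ((j`!)%:R * ((n'.+1 - j)`!)%:R) = (n'.+1`!)%:R :> rat
      by rewrite -!natrM bin_fact.
    rewrite -bf factS natrM -mulr_natr. field.
    by rewrite !fact_neq0 nat1r !pnatr_eq0 -lt0n bin_gt0 jle.
  - have c1 : (n'.+1 < M)%N by rewrite /M /M0; lia.
    have c2 : (1 < M)%N by rewrite /M /M0; lia.
    rewrite coef_deriv !coef_poly subSnn c1 c2 !factS fact0 !natrM -mulr_natr.
    field. by rewrite !fact_neq0 nat1r !pnatr_eq0.
  - have c1 : (n'.+2 < M)%N by rewrite /M /M0; lia.
    have c2 : (0 < M)%N by rewrite /M /M0; lia.
    rewrite coef_deriv !coef_poly subnn c1 c2 !factS fact0 !natrM -mulr_natr.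
    field. by rewrite !fact_neq0 nat1r -natrD !pnatr_eq0.
have sumR : \sum_(i < n'.+1 | (0 < i)%N)
     B N' (n'.+1 - i + 1)%N * 'C(n'.+1, n'.+1 - i + 1)%:R * B N'.+1 i =
   \sum_(j < n') (B N' (n'.+1 - j)%N * 'C(n'.+1, j)%:R * B N'.+1 j.+1).
  rewrite big_mkcond big_ord_recl /= add0r; apply: eq_bigr => j _.
  have jn := ltn_ord j.
  have bj : bump 0 j = j.+1 by rewrite /bump add1n.
  rewrite bj (_ : (n'.+1 - j.+1 + 1 = n'.+1 - j)%N); last by lia.
  by rewrite bin_sub //; lia.
rewrite sumR.
have c1 : (n'.+1 < M)%N by rewrite /M /M0; lia.
have c2 : (n'.+2 < M)%N by rewrite /M /M0; lia.
move: Dn; rewrite /D coefB coefB coefD sumE coef_deriv !coef_poly c1 c2 b0 b1.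
set S := (\sum_(j < n') _).
set Dx := (X in X = 0 -> _) => Dn.
apply/eqP; rewrite -subr_eq0; apply/eqP.
transitivity ((n'.+1`!)%:R * Dx); last by rewrite Dn mulr0.
rewrite /Dx -[B N'.+1 n'.+2 / _ *+ _]mulr_natr !factS !natrM natrD.
field. by rewrite !fact_neq0 !nat1r -natrD !pnatr_eq0.
Qed.


Definition gg (B : nat -> nat -> rat) N (a b : nat) : rat :=
  B N.-1 (a - b + 1)%N * ('C(a, a - b + 1))%:R * (N%:R / (N + b)%:R).
Definition term (B : nat -> nat -> rat) N (c : seq nat) (m : nat) : rat :=
  B N.-1 (nth 0%N c m) * \prod_(1 <= k < m.+1) gg B N (nth 0%N c k.-1) (nth 0%N c k).
Definition SS (B : nat -> nat -> rat) N L K n : rat :=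
  \sum_(m < L) \sum_(t : m.-tuple 'I_K |
      sorted (fun a b : nat => (b < a)%N) (n :: map val t)
      && all (fun i : 'I_K => (0 < val i)%N) t) term B N (n :: map val t) m.

Lemma sum_tuple_cons (T : finType) m (F : m.+1.-tuple T -> rat) :
  \sum_(t : m.+1.-tuple T) F t = \sum_(x : T) \sum_(t : m.-tuple T) F [tuple of x :: t].
Proof.
rewrite pair_big /=.
rewrite (reindex (fun p : T * m.-tuple T => [tuple of p.1 :: p.2])) /=.
  by apply: eq_bigr => -[x t] _.
exists (fun t => (thead t, [tuple of behead t])) => [[x t] _|t _] /=.
  by congr pair; apply: val_inj.
by apply: val_inj => /=; case: t => -[|x s].
Qed.

Lemma term_cons B N n i s m :
  term B N (n :: i :: s) m.+1 = gg B N n i * term B N (i :: s) m.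
Proof.
rewrite /term big_nat_recl //= mulrCA; congr (_ * (_ * _)).
rewrite [in LHS]big_nat_cond [in RHS]big_nat_cond; apply: eq_bigr => k /andP[/andP[k1 _] _].
by case: k k1.
Qed.

Lemma SS_rec B N L K n : SS B N L.+1 K n =
  B N.-1 n + \sum_(i < K | (0 < i < n)%N) gg B N n i * SS B N L K i.
Proof.
rewrite /SS big_ord_recl /=; congr (_ + _).
  rewrite (eq_bigl (pred1 [tuple])); last by move=> t; rewrite [t]tuple0 /= eqxx.
  by rewrite big_pred1_eq /term big_geq // mulr1.
under [RHS]eq_bigr do rewrite mulr_sumr.
rewrite exchange_big /=; apply: eq_bigr => m _.
have bm : bump 0 m = m.+1 by rewrite /bump add1n.
rewrite big_mkcond sum_tuple_cons [RHS]big_mkcond /= bm; apply: eq_bigr => i _.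
case hi: (0 < i < n)%N.
  rewrite mulr_sumr [RHS]big_mkcond; apply: eq_bigr => t _ /=.
  case/andP: hi => -> ->; rewrite /=.
  by case: ifP => _; rewrite ?mulr0 // term_cons.
rewrite big1 // => t _ /=.
case: ifP => // /andP[/andP[h1 _] /andP[h2 _]].
by move: hi; rewrite h1 h2.
Qed.


Lemma mainL (B : nat -> nat -> rat) N' (N0 : (0 < N')%N)
  (h1 : hypB_gf N' (B N')) (h2 : hypB_gf N'.+1 (B N'.+1)) :
  forall L n K, (1 <= n <= L)%N -> (n <= K)%N ->
  N'.+1%:R / (N'.+1 + n)%:R * SS B N'.+1 L K n = B N'.+1 n.
Proof.
elim=> [|L IH] n K hn hK; first by lia.
rewrite SS_rec.
have e : \sum_(i < K | (0 < i < n)%N) gg B N'.+1 n i * SS B N'.+1 L K i =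
         \sum_(i < K | (0 < i < n)%N) B N' (n - i + 1)%N * 'C(n, n - i + 1)%:R * B N'.+1 i.
  apply: eq_bigr => i /andP[i0 iN].
  rewrite /gg -mulrA IH //; lia.
rewrite e -(big_ord_widen_cond K (fun i => (0 < i)%N)
   (fun i => B N' (n - i + 1)%N * 'C(n, n - i + 1)%:R * B N'.+1 i) hK).
case: n hn hK e => [|n'] hn hK e; first by lia.
rewrite /= -(@recur B N' N0 h1 h2 n'); field.
by rewrite !nat1r -natrD !pnatr_eq0.
Qed.

Theorem proposition5 (B : nat -> nat -> rat)
  (hB : forall N : nat, (1 <= N)%N -> hypB_gf N (B N))
  (N n : nat) (hN : (2 <= N)%N) (hn : (1 <= n)%N) :
  B N n =
  N%:R / (N + n)%:R *
  \sum_(m < n)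
    \sum_(t : m.-tuple 'I_n |
          sorted (fun a b : nat => (b < a)%N) (n :: map val t)
          && all (fun i : 'I_n => (0 < val i)%N) t)
      (let c := n :: map val t in
       B (N.-1) (nth 0%N c m) *
       \prod_(1 <= k < m.+1)
         (B (N.-1) (nth 0%N c k.-1 - nth 0%N c k + 1)%N
          * ('C(nth 0%N c k.-1, nth 0%N c k.-1 - nth 0%N c k + 1))%:R
          * (N%:R / (N + nth 0%N c k)%:R))).
Proof.
case: N hN => [|N'] hN //.
have N0 : (0 < N')%N by lia.
have := @mainL B N' N0 (hB N' N0) (hB N'.+1 isT) n n n.
rewrite hn leqnn => /(_ isT isT) <-.
by [].
Qed.
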